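(* Let $n\ge 1$, $\mathbf{C} = (C_1,\dots,C_n)\in[0,1]^n$ and $\mathbf{V} = (V_1,\dots,V_n)\in[0,1]^n$. Define $$r^{\mathbf{L}}(\mathbf{C},\mathbf{V}) = \frac{1}{n}\sum_{j=1}^n (C_j - V_j), \qquad r^{\mathbf{V}}(\mathbf{C},\mathbf{V}) = \frac{1}{n}\sqrt{\Big(\sum_{j=1}^n C_j\cos V_j\Big)^2 + \Big(\sum_{j=1}^n C_j \sin V_j\Big)^2}.$$ For $i\in\{1,\dots,n\}$ and $\Delta c>0$, let $\Delta r^{\mathbf{L}}(C_i) = r^{\mathbf{L}}(\mathbf{C}+\Delta c\,\mathbf{e}_i,\mathbf{V}) - r^{\mathbf{L}}(\mathbf{C},\mathbf{V})$ and $\Delta r^{\mathbf{V}}(C_i) = r^{\mathbf{V}}(\mathbf{C}+\Delta c\,\mathbf{e}_i,\mathbf{V}) - r^{\mathbf{V}}(\mathbf{C},\mathbf{V})$, where $\mathbf{e}_i$ is the $i$-th standard basis vector. Then $\Delta r^{\mathbf{V}}(C_i) > 0$ and $\Delta r^{\mathbf{V}}(C_i) \le \Delta r^{\mathbf{L}}(C_i) = \frac{\Delta c}{n}$.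
   Context: Here $C_j$ and $V_j$ are the consistency and volatility of the $j$-th reasoning trajectory in a group of $n$ trajectories sharing the same final answer; $r^{\mathbf{L}}$ is the linear intrinsic reward and $r^{\mathbf{V}}$ the vectorial intrinsic reward (magnitude of the averaged vectors $C_j(\cos V_j, \sin V_j)$). *)

(* Defs.v *)
From HB Require Import structures.
From mathcomp Require Import all_boot all_order all_algebra.
From mathcomp Require Import all_classical all_reals all_analysis.
Unset Printing Implicit Defensive.
Import Order.TTheory GRing.Theory Num.Theory.
Local Open Scope ring_scope.

Definition rewardL (R : realType) (n : nat) (C V : 'I_n -> R) : R :=
  n%:R^-1 * \sum_(j < n) (C j - V j).

Definition rewardV (R : realType) (n : nat) (C V : 'I_n -> R) : R :=
  n%:R^-1 * Num.sqrt ((\sum_(j < n) C j * cos (V j)) ^+ 2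
                      + (\sum_(j < n) C j * sin (V j)) ^+ 2).

Definition perturbC (R : realType) (n : nat) (C : 'I_n -> R) (i : 'I_n) (dc : R)
  : 'I_n -> R := fun j => if j == i then C j + dc else C j.

(* Main.v *)
Require Import Defs.
From HB Require Import structures.
From mathcomp Require Import all_boot all_order all_algebra.
From mathcomp Require Import all_classical all_reals all_analysis.
From mathcomp Require Import ring lra.
Import Order.TTheory GRing.Theory Num.Theory.
Local Open Scope ring_scope.

Lemma sum_pert (R : realType) (n : nat) (C F : 'I_n -> R) (i : 'I_n) (dc : R) :
  \sum_(j < n) perturbC R n C i dc j * F j = \sum_(j < n) C j * F j + dc * F i.
Proof.
rewrite (bigD1 i) //= [in RHS](bigD1 i) //= /perturbC eqxx.
rewrite (eq_bigr (fun j => C j * F j)); last by move=> j /negbTE ->.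
rewrite mulrDl; lra.
Qed.

Lemma cos01 (R : realType) (x : R) : 0 <= x <= 1 -> 0 <= cos x.
Proof.
move=> /andP[h0 h1]; apply: cos_ge0_pihalf; have := @pi_ge2 R => hp.
apply/andP; split; lra.
Qed.

Lemma sin01 (R : realType) (x : R) : 0 <= x <= 1 -> 0 <= sin x.
Proof.
move=> /andP[h0 h1]; apply: sin_ge0_pi; have := @pi_ge2 R => hp.
apply/andP; split; lra.
Qed.

Theorem mainTheorem6 (R : realType) (n : nat) (C V : 'I_n -> R)
  (hn : (1 <= n)%N)
  (hC : forall j, 0 <= C j <= 1) (hV : forall j, 0 <= V j <= 1)
  (i : 'I_n) (dc : R) (hdc : 0 < dc) :
  let dL := rewardL R n (perturbC R n C i dc) V - rewardL R n C V in
  let dV := rewardV R n (perturbC R n C i dc) V - rewardV R n C V in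
  0 < dV /\ dV <= dL /\ dL = dc / n%:R.
Proof.
move=> dL dV.
have hn0 : 0 < n%:R :> R by rewrite ltr0n.
have hni : 0 < n%:R^-1 :> R by rewrite invr_gt0.
have eL : dL = dc / n%:R.
  rewrite /dL /rewardL -mulrBr.
  rewrite (bigD1 i) //= [X in _ - X](bigD1 i) //= /perturbC eqxx.
  rewrite (eq_bigr (fun j => C j - V j)); last by move=> j /negbTE ->.
  rewrite mulrC; congr (_ * _); lra.
set A := \sum_(j < n) C j * cos (V j).
set B := \sum_(j < n) C j * sin (V j).
set c := cos (V i). set s := sin (V i).
have hcs : c ^+ 2 + s ^+ 2 = 1 by apply: cos2Dsin2.
have hdot : 0 <= A * c + B * s.
  rewrite /A /B !mulr_suml -big_split /=; apply: sumr_ge0 => j _.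
  have := hC j => /andP[? _].
  have := cos01 _ _ (hV j); have := sin01 _ _ (hV j).
  have := cos01 _ _ (hV i); have := sin01 _ _ (hV i). move=> *.
  by apply: addr_ge0; apply: mulr_ge0 => //; apply: mulr_ge0.
have eV : dV = n%:R^-1 * (Num.sqrt ((A + dc * c) ^+ 2 + (B + dc * s) ^+ 2)
                           - Num.sqrt (A ^+ 2 + B ^+ 2)).
  by rewrite /dV /rewardV !sum_pert -mulrBr.
set S := A ^+ 2 + B ^+ 2.
set S' := (A + dc * c) ^+ 2 + (B + dc * s) ^+ 2.
have hS : 0 <= S by rewrite /S; apply: addr_ge0; apply: sqr_ge0.
have hSS : S' = S + 2 * dc * (A * c + B * s) + dc ^+ 2.
  rewrite /S' /S; have -> : dc ^+ 2 = dc ^+ 2 * (c ^+ 2 + s ^+ 2) by rewrite hcs mulr1.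
  ring.
have hlt : S < S'.
  rewrite hSS; have : 0 < dc ^+ 2 by rewrite exprn_gt0.
  have : 0 <= 2 * dc * (A * c + B * s) by apply: mulr_ge0 => //; apply: mulr_ge0 => //; lra.
  lra.
have hsq0 := sqrtr_ge0 S.
have hsqS := sqr_sqrtr hS.
have hCS : A * c + B * s <= Num.sqrt S.
  have h2 : (A * c + B * s) ^+ 2 <= S.
    have -> : S = S * (c ^+ 2 + s ^+ 2) by rewrite hcs mulr1.
    rewrite /S; have : 0 <= (A * s - B * c) ^+ 2 by apply: sqr_ge0.
    lra.
  by apply: le_trans (ler_norm _) _; rewrite -sqrtr_sqr ler_sqrt.
have hup : Num.sqrt S' <= Num.sqrt S + dc.
  have hpos : 0 <= Num.sqrt S + dc by lra.
  rewrite -[X in _ <= X](ger0_norm hpos) -sqrtr_sqr ler_sqrt; last by apply: sqr_ge0.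
  rewrite hSS; nra.
have hmono : Num.sqrt S < Num.sqrt S'.
  by rewrite ltr_sqrt //; apply: (le_lt_trans hS).
split; last split => //.
- by rewrite eV; apply: mulr_gt0 => //; lra.
- rewrite eL eV mulrC ler_pM2r //; lra.
Qed.
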